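(* For every rational constant $0<c\le1$ and every $\varepsilon>0$ there is an instance of Maximum Coverage with $k=cn$ for which the ratio between the optimal integral value and the optimal value of the LP $$\max\Bigl\{\sum_{e\in E}w_ex_e : x_e\le\min\Bigl\{1,\sum_{i:e\in S_i}y_i\Bigr\}\ \forall e\in E,\ \sum_{i=1}^n y_i\le cn,\ y_i\ge0\ \forall i\in[n]\Bigr\}$$ is at most $(1+\varepsilon)\rho(c)$.
   Context: Maximum Coverage (MC): given a finite set of elements $E$ with weights $w\colon E\to\mathbb{R}_{\ge0}$, sets $S_1,\dots,S_n\subseteq E$ and an integer $k$, find $X\subseteq[n]$ with $|X|\le k$ maximizing $\sum_{e\in\bigcup_{i\in X}S_i}w_e$. Definition of $\rho(c)$: for $\alpha\in[0,1]$ and integer $m\ge1$ let $\sigma(\alpha,m)=\bigl(1-\alpha c-(1-\alpha)/m\bigr)^m$. If $c=1/s$ for some integer $s\ge1$, then $\rho(c)=1-(1-c)^{1/c}$. Otherwise $1/(s+1)<c<1/s$ for a unique integer $s\ge1$, there is a unique $\alpha^*\in(0,1)$ with $\sigma(\alpha^*,s)=\sigma(\alpha^*,s+1)$, and $\rho(c)=1-\sigma(\alpha^*,s)$. *)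

(* Defs.v *)
From HB Require Import structures.
From mathcomp Require Import all_boot all_order all_algebra.
From mathcomp Require Import boolp classical_sets reals.
Set Implicit Arguments. Unset Strict Implicit. Unset Printing Implicit Defensive.
Import Order.TTheory GRing.Theory Num.Theory.
Local Open Scope ring_scope.

Section Defs.
Variable R : realType.

Definition mc_sigma (c a : R) (m : nat) : R :=
  (1 - a * c - (1 - a) / m%:R) ^+ m.

Definition mc_s (c : R) : nat := Num.truncn (c^-1).

(* alpha^* : the (paper: unique) alpha in (0,1) with sigma(alpha,s) = sigma(alpha,s+1) *)
Definition alpha_star (c : R) : R :=
  xget 0 [set a : R | 0 < a < 1 /\ mc_sigma c a (mc_s c) = mc_sigma c a (mc_s c).+1].

(* rho(c); in the case c = 1/s, (1-c)^(1/c) = (1-c)^s *)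
Definition rho (c : R) : R :=
  if c == ((mc_s c)%:R)^-1 then 1 - (1 - c) ^+ (mc_s c)
  else 1 - mc_sigma c (alpha_star c) (mc_s c).

Definition cov_value (E : finType) (w : E -> R) (n : nat) (S : 'I_n -> {set E})
    (X : {set 'I_n}) : R :=
  \sum_(e : E | [exists i in X, e \in S i]) w e.

Definition mc_opt (E : finType) (w : E -> R) (n : nat) (S : 'I_n -> {set E})
    (k : nat) : R :=
  \big[Num.max/0]_(X : {set 'I_n} | (#|X| <= k)%N) cov_value w S X.

Definition lp_feasible (E : finType) (n : nat) (S : 'I_n -> {set E}) (b : R)
    (x : E -> R) (y : 'I_n -> R) : Prop :=
  (forall e, x e <= Num.min 1 (\sum_(i | e \in S i) y i)) /\
  \sum_i y i <= b /\ (forall i, 0 <= y i).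

Definition lp_obj (E : finType) (w : E -> R) (x : E -> R) : R :=
  \sum_(e : E) w e * x e.

Definition lp_opt (E : finType) (w : E -> R) (n : nat) (S : 'I_n -> {set E})
    (b : R) : R :=
  sup [set v : R | exists x y, lp_feasible S b x y /\ v = lp_obj w x].

End Defs.

(* Main.v *)
Require Import Defs.
From HB Require Import structures.
From mathcomp Require Import all_boot all_order all_algebra.
From mathcomp Require Import boolp classical_sets reals.
From mathcomp Require Import ring lra zify.
From Stdlib Require Import Lia.
Import Order.TTheory GRing.Theory Num.Theory.
Local Open Scope ring_scope.


Lemma tangent (R : realFieldType) (u v : R) m : 0 <= u -> 0 <= v ->
  v ^+ m.+1 + m.+1%:R * v ^+ m * (u - v) <= u ^+ m.+1.
Proof.
move=> u0 v0; elim: m => [|m IH]; first by rewrite expr0 !expr1; lra.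
have Vm : 0 <= v ^+ m by apply: exprn_ge0.
rewrite !exprSr in IH *.
set V := v ^+ m in Vm IH *.
have H1 := ler_wpM2r u0 IH.
have H2 : 0 <= m.+1%:R * V * (u - v) ^+ 2 by apply: mulr_ge0; [apply: mulr_ge0 => //; apply: ler0n| apply: sqr_ge0].
rewrite -mulrA in H1 *; rewrite (mulrSr (1:R) m.+1) in H2 |- *.
rewrite -!natr1 in H2 |- *.
set t := m%:R in H2 H1 IH *.
nra.
Qed.

Lemma ffact_bound (R : realFieldType) (h m : nat) : (0 < h)%N ->
  (1 : R) - (m * m)%:R / h%:R <= (h ^_ m)%:R / h%:R ^+ m /\ (h ^_ m)%:R / h%:R ^+ m <= (1 : R).
Proof.
move=> h0; have hR : 0 < h%:R :> R by rewrite ltr0n.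
elim: m => [|m [IH1 IH2]].
  by rewrite ffactn0 expr0 divr1 /= mul0r subr0 lexx.
have P0 : 0 <= (h ^_ m)%:R / h%:R ^+ m :> R by apply: divr_ge0 => //; apply: exprn_ge0; exact: ltW.
rewrite ffactnSr exprSr.
have -> : (h ^_ m * (h - m))%:R / (h%:R ^+ m * h%:R) = ((h ^_ m)%:R / h%:R ^+ m) * ((h - m)%:R / h%:R) :> R.
  rewrite natrM invfM; ring.
set P := _ / _ in P0 IH1 IH2 *.
have T1 : (h - m)%:R / h%:R <= 1 :> R by rewrite ler_pdivrMr // mul1r ler_nat leq_subr.
have T0 : 0 <= (h - m)%:R / h%:R :> R by apply: divr_ge0 => //; exact: ltW.
have T2 : 1 - m%:R / h%:R <= (h - m)%:R / h%:R :> R.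
  case: (leqP m h) => Hm.
  - by rewrite natrB // mulrBl divff //; exact: lt0r_neq0.
  - have -> : (h - m)%N = 0%N by apply/eqP; rewrite subn_eq0 ltnW.
    by rewrite mul0r subr_le0 ler_pdivlMr // mul1r ler_nat ltnW.
split; first last.
  by have := ler_pM P0 T0 IH2 T1; rewrite mulr1.
have : P * (1 - m%:R / h%:R) <= P * ((h - m)%:R / h%:R) by apply: ler_wpM2l.
have Hmm : (m.+1 * m.+1)%:R / h%:R = (m * m)%:R / h%:R + m%:R / h%:R + (m.+1)%:R / h%:R :> R.
  rewrite -!mulrDl; congr (_ / _); rewrite -!natrD; congr (_%:R); lia.
rewrite Hmm.
have Q0 : 0 <= m%:R / h%:R :> R by apply: divr_ge0; [apply: ler0n| exact: ltW].
have Q1 : 0 <= m.+1%:R / h%:R :> R by apply: divr_ge0; [apply: ler0n| exact: ltW].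
set a := (m * m)%:R / h%:R in IH1 *; set b := m%:R / h%:R in Q0 T2 *; set d := m.+1%:R / h%:R in Q1 *.
nra.
Qed.

Lemma main_ineq (R : realFieldType) (s' : nat) (A B M p u v us vs : R) :
  0 <= u -> 0 <= v -> 0 <= us -> 0 <= vs -> 0 <= A -> 0 <= B -> 0 < M ->
  us ^+ s'.+1 = vs ^+ s'.+2 ->
  s'.+1%:R * A * (1 - us) + s'.+2%:R * B * (1 - vs) = p ->
  (1 - u) * (s'.+1%:R * M * A) + (1 - v) * (s'.+2%:R * M * B) <= M * p ->
  A * vs ^+ s'.+1 * (1 - u ^+ s'.+1) + B * us ^+ s' * (1 - v ^+ s'.+2)
    <= (A * vs ^+ s'.+1 + B * us ^+ s') * (1 - us ^+ s'.+1).
Proof.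
move=> u0 v0 us0 vs0 A0 B0 M0 Heq Hp Hab.
have T1 := @tangent _ _ _ s' u0 us0.
have T2 := @tangent _ _ _ s'.+1 v0 vs0.
have K : 0 <= s'.+1%:R * A * (u - us) + s'.+2%:R * B * (v - vs).
  have : M * (s'.+1%:R * A * (u - us) + s'.+2%:R * B * (v - vs)) >= 0.
    have -> : M * (s'.+1%:R * A * (u - us) + s'.+2%:R * B * (v - vs)) =
       M * p - ((1 - u) * (s'.+1%:R * M * A) + (1 - v) * (s'.+2%:R * M * B)).
      rewrite -Hp; ring.
    by rewrite subr_ge0.
  by rewrite pmulr_rge0.
have P1 : 0 <= A * vs ^+ s'.+1 by apply: mulr_ge0 => //; apply: exprn_ge0.
have P2 : 0 <= B * us ^+ s' by apply: mulr_ge0 => //; apply: exprn_ge0.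
have H1 := ler_wpM2l P1 T1.
have H2 := ler_wpM2l P2 T2.
have Q : 0 <= us ^+ s' * vs ^+ s'.+1 by apply: mulr_ge0; apply: exprn_ge0.
have K2 := mulr_ge0 Q K.
rewrite -Heq in H2.
suff : A * vs ^+ s'.+1 * (us ^+ s'.+1 + s'.+1%:R * us ^+ s' * (u - us)) +
    B * us ^+ s' * (us ^+ s'.+1 + s'.+2%:R * vs ^+ s'.+1 * (v - vs)) - 
    (A * vs ^+ s'.+1 + B * us ^+ s') * us ^+ s'.+1 = 
    us ^+ s' * vs ^+ s'.+1 * (s'.+1%:R * A * (u - us) + s'.+2%:R * B * (v - vs)).
  move=> E.
  have : (A * vs ^+ s'.+1 + B * us ^+ s') * us ^+ s'.+1 <= A * vs ^+ s'.+1 * u ^+ s'.+1 + B * us ^+ s' * v ^+ s'.+2.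
    apply: le_trans (lerD H1 H2); rewrite -subr_ge0 E //.
  move=> HH.
  set X1 := A * vs ^+ s'.+1 in HH *; set X2 := B * us ^+ s' in HH *.
  set U := u ^+ s'.+1 in HH *; set V := v ^+ s'.+2 in HH *; set W := us ^+ s'.+1 in HH *.
  nra.
ring.
Qed.

Lemma ineq0 (R : realFieldType) (s : nat) : (0 < s)%N ->
  (1 - s%:R^-1) ^+ s <= (1 - s.+1%:R^-1) ^+ s.+1 :> R.
Proof.
case: s => // s _.
have r0 : 0 <= 1 - s.+1%:R^-1 :> R by rewrite subr_ge0 invf_le1 // ?ler1n // ltr0n.
have t0 : 0 <= 1 - s.+2%:R^-1 :> R by rewrite subr_ge0 invf_le1 // ?ler1n // ltr0n.
have T := @tangent _ _ _ s.+1 t0 r0.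
apply: le_trans T.
set r := 1 - s.+1%:R^-1 in r0 *; set t := 1 - s.+2%:R^-1 in t0 *.
have -> : r ^+ s.+2 + s.+2%:R * r ^+ s.+1 * (t - r) = r ^+ s.+1 * (r + s.+2%:R * (t - r)).
  rewrite exprSr; ring.
have -> : r + s.+2%:R * (t - r) = 1.
  rewrite /r /t; field.
  by have := ler0n R s => H; apply/andP; split; apply: lt0r_neq0; lra.
by rewrite mulr1.
Qed.


Lemma count_cov (m k : nat) (B : {set 'I_k}) :
  #|[pred f : {ffun 'I_m -> 'I_k} | [exists t, f t \in B]]| = (k ^ m - (k - #|B|) ^ m)%N.
Proof.
have E : [pred f : {ffun 'I_m -> 'I_k} | [exists t, f t \in B]] =i predC (ffun_on (~: B)).
  move=> f; rewrite !inE /=; apply/idP/idP.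
  - case/existsP=> t Ht; apply/ffun_onP => /(_ t); by rewrite inE Ht.
  - move=> H; apply: contraNT H => /existsPn Hn; apply/ffun_onP => t.
    by rewrite inE Hn.
rewrite (eq_card E); have := @cardC {ffun 'I_m -> 'I_k} (ffun_on (~: B)).
rewrite card_ffun_on card_ffun !card_ord.
move=> H; have HB := cardsC B; rewrite card_ord in HB.
have -> : (k - #|B| = #|~: B|)%N by rewrite -{1}HB addKn.
by rewrite -H addKn.
Qed.

Lemma lp_opt_ge (R : realType) (E : finType) (w : E -> R) n (S : 'I_n -> {set E}) b x y :
  (forall e, 0 <= w e) -> lp_feasible S b x y -> lp_obj w x <= lp_opt w S b.
Proof.
move=> w0 Hf; rewrite /lp_opt; apply: sup_upper_bound; last by exists x, y.
split; first by exists (lp_obj w x), x, y.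
exists (\sum_e w e) => v [x' [y' [[Hx _] ->]]].
rewrite /lp_obj; apply: ler_sum => e _.
rewrite -[X in _ <= X]mulr1; apply: ler_wpM2l => //.
by apply: le_trans (Hx e) _; rewrite ge_min lexx.
Qed.

Section Inst.
Variables (R : realType) (s h l : nat) (lam mu : R).
Definition IE : finType := ({ffun 'I_s -> 'I_h} + {ffun 'I_s.+1 -> 'I_l})%type.
Definition Iw (e : IE) : R := match e with inl _ => lam / h%:R ^+ s | inr _ => mu / l%:R ^+ s.+1 end.
Definition IS (i : 'I_(h + l)) : {set IE} := [set e : IE | match e with
   inl f => [exists t, lshift l (f t) == i] | inr g => [exists t, rshift h (g t) == i] end].

Definition XH (X : {set 'I_(h + l)}) : {set 'I_h} := [set j | lshift l j \in X].
Definition XL (X : {set 'I_(h + l)}) : {set 'I_l} := [set j | rshift h j \in X].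

Lemma card_XHL X : (#|XH X| + #|XL X| = #|X|)%N.
Proof.
rewrite -!sum1_card [RHS]big_split_ord /=.
by congr (_ + _)%N; apply: eq_bigl => i; rewrite inE.
Qed.



Lemma cov_eq X : cov_value Iw IS X =
  lam / h%:R ^+ s * ((h ^ s - (h - #|XH X|) ^ s)%N)%:R +
  mu / l%:R ^+ s.+1 * ((l ^ s.+1 - (l - #|XL X|) ^ s.+1)%N)%:R.
Proof.
rewrite /cov_value big_sumType /=; congr (_ + _).
- rewrite (eq_bigl (fun f => f \in [pred f : {ffun 'I_s -> 'I_h} | [exists t, f t \in XH X]])).
    by rewrite sumr_const count_cov mulr_natr.
  move=> f; rewrite inE /=; apply/existsP/existsP.
  + case=> i /andP[iX]; rewrite inE => /existsP[t /eqP ht]; exists t; by rewrite inE ht.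
  + case=> t; rewrite inE => Ht; exists (lshift l (f t)); rewrite Ht inE; apply/existsP; by exists t.
- rewrite (eq_bigl (fun f => f \in [pred f : {ffun 'I_s.+1 -> 'I_l} | [exists t, f t \in XL X]])).
    by rewrite sumr_const count_cov mulr_natr.
  move=> f; rewrite inE /=; apply/existsP/existsP.
  + case=> i /andP[iX]; rewrite inE => /existsP[t /eqP ht]; exists t; by rewrite inE ht.
  + case=> t; rewrite inE => Ht; exists (rshift h (f t)); rewrite Ht inE; apply/existsP; by exists t.
Qed.
Definition Iy (i : 'I_(h + l)) : R := if (i < h)%N then s%:R^-1 else (s.+1)%:R^-1.
Definition Ix (e : IE) : R := match e with inl f => (injectiveb f)%:R | inr g => (injectiveb g)%:R end.

Lemma Iy_ge0 i : 0 <= Iy i.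
Proof. by rewrite /Iy; case: ifP => _; rewrite invr_ge0 ler0n. Qed.

Lemma Iy_sum : \sum_i Iy i = h%:R / s%:R + l%:R / s.+1%:R.
Proof.
rewrite big_split_ord /=.
rewrite (eq_bigr (fun _ => s%:R^-1)); last by move=> j _; rewrite /Iy /= ltn_ord.
rewrite [X in _ + X](eq_bigr (fun _ => s.+1%:R^-1)); last first.
  by move=> j _; rewrite /Iy /= ltnNge leq_addr.
by rewrite !sumr_const !card_ord !mulr_natl.
Qed.

Lemma Ix_feas (sgt0 : (0 < s)%N) e : Ix e <= Num.min 1 (\sum_(i | e \in IS i) Iy i).
Proof.
have s0 : 0 <= \sum_(i | e \in IS i) Iy i by apply: sumr_ge0 => i _; apply: Iy_ge0.
case: e s0 => [f|g] s0 /=; (case: (boolP (injectiveb _)) => Hi; last by rewrite le_min ler01 s0);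
  rewrite le_min lexx /=.
- rewrite big_split_ord /= -[X in X <= _]addr0; apply: lerD; last first.
    by apply: sumr_ge0 => i _; apply: Iy_ge0.
  rewrite (eq_bigl (fun j => j \in codom f)); last first.
    move=> j; rewrite inE; apply/existsP/codomP.
    + by case=> t /eqP /lshift_inj Ht; exists t; rewrite Ht.
    + by case=> t ->; exists t.
  rewrite (eq_bigr (fun _ => s%:R^-1)); last by move=> j _; rewrite /Iy /= ltn_ord.
  rewrite sumr_const (card_codom (injectiveP _ Hi)) card_ord -[X in _ <= X]mulr_natr mulVf //.
  by rewrite pnatr_eq0 -lt0n.
- rewrite big_split_ord /= -[X in X <= _]add0r; apply: lerD.
    by apply: sumr_ge0 => i _; apply: Iy_ge0.
  rewrite (eq_bigl (fun j => j \in codom g)); last first.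
    move=> j; rewrite inE; apply/existsP/codomP.
    + by case=> t /eqP /rshift_inj Ht; exists t; rewrite Ht.
    + by case=> t ->; exists t.
  rewrite (eq_bigr (fun _ => s.+1%:R^-1)); last by move=> j _; rewrite /Iy /= ltnNge leq_addr.
  by rewrite sumr_const (card_codom (injectiveP _ Hi)) card_ord -[X in _ <= X]mulr_natr mulVf // pnatr_eq0.
Qed.

Lemma Ix_obj : lp_obj Iw Ix = lam / h%:R ^+ s * (h ^_ s)%:R + mu / l%:R ^+ s.+1 * (l ^_ s.+1)%:R.
Proof.
rewrite /lp_obj big_sumType /= -!mulr_sumr; congr (_ * _ + _ * _).
- rewrite (eq_bigr (fun f : {ffun 'I_s -> 'I_h} => if injectiveb f then 1 else 0 : R)); last by move=> f _; case: injectiveb.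
  rewrite -big_mkcond sumr_const; congr (_%:R).
  have H := card_inj_ffuns 'I_s 'I_h; rewrite !card_ord in H; rewrite -H.
  by apply: eq_card => f; rewrite inE.
- rewrite (eq_bigr (fun f : {ffun 'I_s.+1 -> 'I_l} => if injectiveb f then 1 else 0 : R)); last by move=> f _; case: injectiveb.
  rewrite -big_mkcond sumr_const; congr (_%:R).
  have H := card_inj_ffuns 'I_s.+1 'I_l; rewrite !card_ord in H; rewrite -H.
  by apply: eq_card => f; rewrite inE.
Qed.
End Inst.

Lemma mc_opt_le (R : realType) (E : finType) (w : E -> R) n (S : 'I_n -> {set E}) k V :
  0 <= V -> (forall X : {set 'I_n}, (#|X| <= k)%N -> cov_value w S X <= V) -> mc_opt w S k <= V.
Proof.
move=> V0 H; rewrite /mc_opt; apply: (big_ind (fun v => v <= V)) => //.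
by move=> x y Hx Hy; rewrite ge_max Hx Hy.
Qed.

Lemma assemble (R : realType) (s h l k : nat) (c lam mu rho' eps : R) :
  (0 < s)%N -> 0 <= lam -> 0 <= mu -> 0 < lam + mu -> 0 < eps -> 0 <= rho' ->
  h%:R / s%:R + l%:R / s.+1%:R <= c * (h + l)%:R ->
  k%:R = c * (h + l)%:R ->
  (forall a b : nat, (a <= h)%N -> (b <= l)%N -> (a + b <= k)%N ->
     lam / h%:R ^+ s * ((h ^ s - (h - a) ^ s)%N)%:R +
     mu / l%:R ^+ s.+1 * ((l ^ s.+1 - (l - b) ^ s.+1)%N)%:R <= (lam + mu) * rho') ->
  (lam + mu) / (1 + eps) <= lam / h%:R ^+ s * (h ^_ s)%:R + mu / l%:R ^+ s.+1 * (l ^_ s.+1)%:R ->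
  exists (E : finType) (w : E -> R) (n : nat) (S : 'I_n -> {set E}) (k : nat),
    (forall e, 0 <= w e) /\
    k%:R = c * n%:R /\
    0 < lp_opt w S (c * n%:R) /\
    mc_opt w S k / lp_opt w S (c * n%:R) <= (1 + eps) * rho'.
Proof.
move=> s0 lam0 mu0 lm0 eps0 rho0 Hb Hk Hcov HD.
exists (IE s h l), (Iw R s h l lam mu), (h + l)%N, (@IS s h l), k.
have w0 : forall e, 0 <= Iw R s h l lam mu e.
  by case=> _ /=; apply: divr_ge0 => //; apply: exprn_ge0; apply: ler0n.
have HL : (lam + mu) / (1 + eps) <= lp_opt (Iw R s h l lam mu) (@IS s h l) (c * (h + l)%:R).
  apply: le_trans HD _; rewrite -Ix_obj; apply: lp_opt_ge => //.
  split; first by move=> e; apply: Ix_feas.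
  split; last by move=> i; apply: Iy_ge0.
  by rewrite Iy_sum.
have L0 : 0 < (lam + mu) / (1 + eps) by apply: divr_gt0 => //; rewrite addr_gt0.
split => //; split => //; split; first exact: lt_le_trans L0 HL.
rewrite ler_pdivrMr; last exact: lt_le_trans L0 HL.
apply: le_trans (_ : (1 + eps) * rho' * ((lam + mu) / (1 + eps)) <= _); last first.
  apply: ler_wpM2l => //; apply: mulr_ge0 => //; apply: addr_ge0 => //; exact: ltW.
have -> : (1 + eps) * rho' * ((lam + mu) / (1 + eps)) = (lam + mu) * rho'.
  field; apply/negP=> /eqP H; move: eps0; rewrite -(subr0 eps) -H; lra.
apply: mc_opt_le; first by apply: mulr_ge0 => //; exact: ltW.
move=> X HX; rewrite cov_eq; apply: Hcov.
- by apply: leq_trans (max_card _) _; rewrite card_ord.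
- by apply: leq_trans (max_card _) _; rewrite card_ord.
- by rewrite card_XHL.
Qed.

Lemma alpha_ok (R : realType) (c : R) (s : nat) : (0 < s)%N -> 0 < c < 1 -> mc_s c = s ->
  0 <= alpha_star c < 1 /\ mc_sigma c (alpha_star c) s = mc_sigma c (alpha_star c) s.+1.
Proof.
have E1 : forall (a : R) (m : nat), 1 - m%:R^-1 + (m%:R^-1 - c) * a = 1 - a * c - (1 - a) / m%:R.
  by move=> a m; set t := m%:R^-1; ring.
move=> s0 /andP[c0 c1] Hs; rewrite /alpha_star Hs.
match goal with |- context[xget 0 ?S] => set Pset := S end.
pose f a := mc_sigma c a s - mc_sigma c a s.+1.
pose P : {poly R} := ((1 - s%:R^-1)%:P + (s%:R^-1 - c)%:P * 'X) ^+ s -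
   ((1 - s.+1%:R^-1)%:P + (s.+1%:R^-1 - c)%:P * 'X) ^+ s.+1.
have HP : forall a, P.[a] = f a.
  move=> a; rewrite /P /f /mc_sigma !hornerE; congr (_ ^+ _ - _ ^+ _).
  1,2: by rewrite E1.
have f1 : f 1 = (1 - c) ^+ s * c.
  rewrite /f /mc_sigma subrr !mul0r !subr0 mul1r exprSr; ring.
have P0 : P.[0] <= 0.
  rewrite HP /f /mc_sigma !mul0r !subr0 subr_le0 !div1r; exact: ineq0.
have P1 : 0 <= P.[1].
  rewrite HP f1; apply: mulr_ge0; [apply: exprn_ge0|]; lra.
have PP : P.[0] <= 0 <= P.[1] by rewrite P0 P1.
have [x /andP[x0 x1] rx] := @poly_ivt R P 0 1 ler01 PP.
have fx : f x = 0 by rewrite -HP; apply/eqP.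
have xn1 : x != 1.
  apply/eqP => ex; move: fx; rewrite ex f1 => /eqP; rewrite mulf_eq0 expf_eq0 subr_eq0; lra.
have [[a Ha]|Hn] := pselect (exists a, Pset a).
  have := xgetPex 0 (ex_intro _ a Ha); rewrite /Pset /= => -[/andP[a0 a1] ->].
  by rewrite (ltW a0) a1.
rewrite xgetPN; last by move=> a Pa; apply: Hn; exists a.
have x0' : x = 0.
  apply: contra_notP Hn => xne; exists x; rewrite /Pset /=; split.
    by rewrite lt_neqAle eq_sym (negPf (introN eqP xne)) x0 lt_neqAle xn1 x1.
  by apply/eqP; rewrite -subr_eq0 -/(f x) fx.
split; first by rewrite lexx ltr01.
by move: fx; rewrite x0' /f => /eqP; rewrite subr_eq0 => /eqP.
Qed.



Lemma cov_term (R : realFieldType) (x : R) (h a m : nat) : (0 < h)%N -> (a <= h)%N -> (0 < m)%N ->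
  x / h%:R ^+ m * ((h ^ m - (h - a) ^ m)%N)%:R = x * (1 - ((h - a)%:R / h%:R) ^+ m).
Proof.
move=> h0 ah m0.
have hR : h%:R != 0 :> R by rewrite pnatr_eq0 -lt0n.
rewrite natrB; last by rewrite leq_exp2r // leq_subr.
rewrite !natrX expr_div_n; field; exact: expf_neq0.
Qed.

Lemma u_eq (R : realFieldType) (h a : nat) : (0 < h)%N -> (a <= h)%N ->
  (1 - (h - a)%:R / h%:R) * h%:R = a%:R :> R.
Proof.
move=> h0 ah; have hR : h%:R != 0 :> R by rewrite pnatr_eq0 -lt0n.
by rewrite natrB //; field.
Qed.

Lemma Dbound (R : realFieldType) (h m M : nat) (eps : R) : 0 < eps -> (0 < M)%N -> (M <= h)%N ->
  (m * m)%:R * (1 + eps) / eps <= M%:R -> 1 / (1 + eps) <= (h ^_ m)%:R / h%:R ^+ m.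
Proof.
move=> e0 M0 Mh HK.
have h0 : (0 < h)%N by apply: leq_trans Mh.
have [H1 _] := @ffact_bound R h m h0.
apply: le_trans H1.
have hR : 0 < h%:R :> R by rewrite ltr0n.
have MR : 0 < M%:R :> R by rewrite ltr0n.
have X0 : 0 <= (m * m)%:R :> R by apply: ler0n.
set X := (m * m)%:R in X0 HK *.
have HK' : X * (1 + eps) <= M%:R * eps by rewrite -ler_pdivrMr.
have T : X / h%:R <= X / M%:R.
  apply: ler_wpM2l => //; rewrite lef_pV2 ?ler_nat // posrE //.
have T2 : X / M%:R <= eps / (1 + eps).
  rewrite ler_pdivrMr // mulrAC ler_pdivlMr ?(addr_gt0 ltr01 e0) //; lra.
have -> : 1 / (1 + eps) = 1 - eps / (1 + eps).
  field; apply/negP => /eqP H; lra.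
lra.
Qed.

Lemma main_ineq' (R : realFieldType) (s : nat) (A B M p u v us vs : R) : (0 < s)%N ->
  0 <= u -> 0 <= v -> 0 <= us -> 0 <= vs -> 0 <= A -> 0 <= B -> 0 < M ->
  us ^+ s = vs ^+ s.+1 ->
  s%:R * A * (1 - us) + s.+1%:R * B * (1 - vs) = p ->
  (1 - u) * (s%:R * M * A) + (1 - v) * (s.+1%:R * M * B) <= M * p ->
  A * vs ^+ s * (1 - u ^+ s) + B * us ^+ s.-1 * (1 - v ^+ s.+1)
    <= (A * vs ^+ s + B * us ^+ s.-1) * (1 - us ^+ s).
Proof. case: s => // s _; exact: main_ineq. Qed.

Theorem theorem4p2 (R : realType) (p q : nat) (eps : R) :
  (0 < p <= q)%N -> 0 < eps ->
  let c : R := p%:R / q%:R in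
  exists (E : finType) (w : E -> R) (n : nat) (S : 'I_n -> {set E}) (k : nat),
    (forall e, 0 <= w e) /\
    k%:R = c * n%:R /\
    0 < lp_opt w S (c * n%:R) /\
    mc_opt w S k / lp_opt w S (c * n%:R) <= (1 + eps) * rho c.
Proof.
move=> /andP[p0 pq] eps0 c.
set s := (q %/ p)%N.
have s0 : (0 < s)%N by rewrite divn_gt0.
have Hsp : (s * p <= q)%N by apply: leq_trunc_div.
have Hqs : (q < s.+1 * p)%N by apply: ltn_ceil.
have q0 : (0 < q)%N by apply: leq_trans pq.
have pR : 0 < p%:R :> R by rewrite ltr0n.
have qR : 0 < q%:R :> R by rewrite ltr0n.
have sR : 0 < s%:R :> R by rewrite ltr0n.
have c0 : 0 < c by apply: divr_gt0.
have c1 : c <= 1 by rewrite ler_pdivrMr // mul1r ler_nat.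
have Hms : mc_s c = s.
  rewrite /mc_s; apply/eqP; rewrite truncn_eq; last by rewrite invr_ge0 ltW.
  rewrite /c invf_div ler_pdivlMr // ltr_pdivrMr // -!natrM ler_nat ltr_nat.
  by rewrite Hsp Hqs.
set A := (s.+1 * p - q)%N.
set B := (q - s * p)%N.
have AR : A%:R = s.+1%:R * p%:R - q%:R :> R by rewrite natrB ?natrM // ltnW.
have BR : B%:R = q%:R - s%:R * p%:R :> R by rewrite natrB ?natrM.
have A0 : (0 < A)%N by rewrite subn_gt0.
have e1 : 0 < 1 + eps by lra.
set K : R := (s.+1 * s.+1)%:R * (1 + eps) / eps.
have K0 : 0 <= K by apply: divr_ge0; [apply: mulr_ge0; [apply: ler0n| exact: ltW] | exact: ltW].
set M := Num.Def.archi_bound K.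
have KM : K < M%:R := archi_boundP K0.
have M0 : (0 < M)%N by rewrite -(ltr0n R); apply: le_lt_trans KM.
set h := (s * M * A)%N.
set l := (s.+1 * M * B)%N.
set k := (M * p)%N.
have hR : h%:R = s%:R * M%:R * A%:R :> R by rewrite !natrM.
have lR : l%:R = s.+1%:R * M%:R * B%:R :> R by rewrite !natrM.
have Hn : (h + l)%:R = M%:R * q%:R :> R by rewrite natrD hR lR AR BR; ring.
have ceq : c * (h + l)%:R = k%:R.
  rewrite Hn /c /k natrM; field; exact: lt0r_neq0.
have Hb : h%:R / s%:R + l%:R / s.+1%:R <= c * (h + l)%:R.
  rewrite ceq hR lR /k natrM le_eqVlt; apply/orP; left; apply/eqP.
  rewrite AR BR; field.
  by apply/andP; split; apply: lt0r_neq0; [exact: (addr_gt0 ltr01 sR) | exact: sR].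
have Hk : k%:R = c * (h + l)%:R by rewrite ceq.
have h0 : (0 < h)%N by rewrite !muln_gt0 s0 M0 A0.
have Mh : (M <= h)%N by have := leq_mul (leq_mul s0 (leqnn M)) A0; rewrite mul1n muln1.
have HKs : forall m, (m <= s.+1)%N -> (m * m)%:R * (1 + eps) / eps <= M%:R.
  move=> m Hm; apply: le_trans (ltW KM); rewrite /K.
  apply: ler_wpM2r; first by rewrite invr_ge0 ltW.
  apply: ler_wpM2r; first exact: ltW.
  by rewrite ler_nat leq_mul.
have D1 : 1 / (1 + eps) <= (h ^_ s)%:R / h%:R ^+ s.
  apply: (@Dbound R h s M eps eps0 M0 Mh); apply: HKs; exact: leqnSn.
have [B0|Bpos] := eqVneq B 0%N.
  have qsp : q = (s * p)%N.
    by apply/eqP; rewrite eqn_leq Hsp andbT -subn_eq0 -/B B0.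
  have cs : c = s%:R^-1.
    rewrite /c qsp natrM; field; apply/andP; split; exact: lt0r_neq0.
  have -> : rho c = 1 - (1 - c) ^+ s.
    by rewrite /rho Hms; have -> : (c == s%:R^-1) = true by apply/eqP.
  have l0 : l = 0%N by rewrite /l B0 muln0.
  apply: (@assemble R s h l k c 1 0 (1 - (1 - c) ^+ s) eps) => //.
  - by rewrite addr0.
  - by rewrite subr_ge0 exprn_ile1 //; lra.
  - move=> a b ah bl abk.
    rewrite cov_term // !mul0r addr0 mul1r addr0 mul1r lerD2l lerN2.
    apply: lerXn2r; rewrite ?nnegrE; first by lra.
      by apply: divr_ge0; apply: ler0n.
    have U := @u_eq R h a h0 ah.
    have ak : a%:R <= k%:R :> R by rewrite ler_nat; apply: leq_trans abk; apply: leq_addr.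
    move: Hk; rewrite l0 addn0 => Hk.
    have hR' : 0 < h%:R :> R by rewrite ltr0n.
    set u := (h - a)%:R / h%:R in U *.
    nra.
  - rewrite !mul0r !addr0 mul1r mulrC.
    by rewrite mul1r; move: D1; rewrite mul1r.
have B0' : (0 < B)%N by rewrite lt0n.
have cq : c * q%:R = p%:R by rewrite /c; field; exact: lt0r_neq0.
have cne : (c == s%:R^-1) = false.
  apply/negP => /eqP H.
  have E : s%:R * p%:R = q%:R :> R.
    by rewrite -cq H mulrA mulfV ?mul1r //; exact: lt0r_neq0.
  move: Bpos; rewrite /B; move: E; rewrite -natrM => /eqP; rewrite eqr_nat => /eqP ->.
  by rewrite subnn.
have pq' : (p < q)%N.
  by apply: (@leq_ltn_trans (s * p)); [rewrite leq_pmull | rewrite -subn_gt0].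
have c1' : c < 1 by rewrite ltr_pdivrMr // mul1r ltr_nat.
have c01 : 0 < c < 1 by rewrite c0 c1'.
have [/andP[al0 al1] Heqa] := @alpha_ok R c s s0 c01 Hms.
set al := alpha_star c in al0 al1 Heqa.
set us := 1 - al * c - (1 - al) / s%:R.
set vs := 1 - al * c - (1 - al) / s.+1%:R.
have Heq' : us ^+ s = vs ^+ s.+1 by move: Heqa; rewrite /mc_sigma.
have -> : rho c = 1 - us ^+ s by rewrite /rho Hms cne.
have t0 : 0 < s%:R^-1 :> R by rewrite invr_gt0.
have t1 : s%:R^-1 <= 1 :> R by rewrite invf_le1 // ler1n.
have t0' : 0 < s.+1%:R^-1 :> R by rewrite invr_gt0.
have t1' : s.+1%:R^-1 <= 2^-1 :> R.
  by rewrite lef_pV2 ?posrE ?ltr0n // ler_nat.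
have us0 : 0 <= us.
  rewrite /us; set t := s%:R^-1 in t0 t1 *; nra.
have us1 : us <= 1.
  rewrite /us; set t := s%:R^-1 in t0 t1 *; nra.
have vs0 : 0 < vs.
  rewrite /vs; set t := s.+1%:R^-1 in t0' t1' *; nra.
have l0 : (0 < l)%N by rewrite !muln_gt0 M0 B0'.
have Ml : (M <= l)%N by have := leq_mul (leq_mul (ltn0Sn s) (leqnn M)) B0'; rewrite mul1n muln1.
have D2 : 1 / (1 + eps) <= (l ^_ s.+1)%:R / l%:R ^+ s.+1.
  by apply: (@Dbound R l s.+1 M eps eps0 M0 Ml); apply: HKs.
have AR0 : 0 < A%:R :> R by rewrite ltr0n.
have BR0 : 0 < B%:R :> R by rewrite ltr0n.
have lam0 : 0 < A%:R * vs ^+ s by apply: mulr_gt0 => //; apply: exprn_gt0.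
have mu0 : 0 <= B%:R * us ^+ s.-1 by apply: mulr_ge0; [exact: ltW| apply: exprn_ge0].
apply: (@assemble R s h l k c (A%:R * vs ^+ s) (B%:R * us ^+ s.-1) (1 - us ^+ s) eps) => //.
- exact: ltW.
- exact: ltr_pwDl.
- by rewrite subr_ge0 exprn_ile1.
- move=> a b ah bl abk.
  rewrite !cov_term //.
  apply: (@main_ineq' R s A%:R B%:R M%:R p%:R) => //.
  all: try by apply: divr_ge0; apply: ler0n.
  all: try exact: ltW.
  all: try by rewrite ltr0n.
  + rewrite AR BR /us /vs /c; field.
    apply/and3P; split; apply: lt0r_neq0; [exact: (addr_gt0 ltr01 sR)|exact: qR|exact: sR].
  + rewrite -hR -lR (@u_eq R h a) // (@u_eq R l b) // -natrD -natrM ler_nat.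
    exact: abk.
- set lam := A%:R * vs ^+ s; set mu := B%:R * us ^+ s.-1.
  have -> : (lam + mu) / (1 + eps) = lam * (1 / (1 + eps)) + mu * (1 / (1 + eps)) by ring.
  have -> : lam / h%:R ^+ s * (h ^_ s)%:R + mu / l%:R ^+ s.+1 * (l ^_ s.+1)%:R =
    lam * ((h ^_ s)%:R / h%:R ^+ s) + mu * ((l ^_ s.+1)%:R / l%:R ^+ s.+1) by ring.
  apply: lerD; apply: ler_wpM2l => //; exact: ltW.
Qed.
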